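(* Let $G=(V,E)$ be an infinite, connected, locally finite, vertex-transitive graph and $\Gamma$ a group of automorphisms of $G$ acting transitively on $V$. Suppose $h:V\to\mathbb{R}$ is a random function with $\Gamma$-invariant law and $\Delta h\equiv0$. If $h$ can be written as $h=v-u$ with random functions $u\ge0$ and $v$ satisfying $\sup_{x\in V}\mathbb{E}\,v(x)^+<\infty$, then $h$ is almost surely constant.
   Context: $\Delta u(x)=\sum_{y\sim x}(u(y)-u(x))$. A random function $h$ has $\Gamma$-invariant law if $(h(\alpha^{-1}x))_{x\in V}$ has the same law as $h$ for every $\alpha\in\Gamma$. $a^+=\max(a,0)$. *)

(* Defs.v *)
From HB Require Import structures.
From mathcomp Require Import all_boot all_order all_algebra.
From mathcomp Require Import all_classical all_reals all_analysis.
From Stdlib Require Import Relations.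
Set Implicit Arguments. Unset Strict Implicit. Unset Printing Implicit Defensive.
Import Order.TTheory GRing.Theory Num.Theory.
Local Open Scope classical_set_scope.
Local Open Scope ring_scope.

Definition simple_graph (V : Type) (adj : V -> V -> Prop) : Prop :=
  (forall x y, adj x y -> adj y x) /\ (forall x, ~ adj x x).

Definition neighbors (V : Type) (adj : V -> V -> Prop) (x : V) : set V :=
  [set y | adj x y].

Definition locally_finite (V : Type) (adj : V -> V -> Prop) : Prop :=
  forall x, finite_set (neighbors adj x).

Definition infinite_graph (V : Type) : Prop := ~ finite_set [set: V].

Definition connected_graph (V : Type) (adj : V -> V -> Prop) : Prop :=
  forall x y, clos_refl_trans V adj x y.

Definition automorphism (V : Type) (adj : V -> V -> Prop) (a : V -> V) : Prop :=
  bijective a /\ (forall x y, adj x y <-> adj (a x) (a y)).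

Definition vertex_transitive (V : Type) (adj : V -> V -> Prop) : Prop :=
  forall x y, exists a, automorphism adj a /\ a x = y.

Definition automorphism_group (V : Type) (adj : V -> V -> Prop)
  (Gamma : set (V -> V)) : Prop :=
  [/\ forall a, Gamma a -> automorphism adj a,
      Gamma id,
      forall a b, Gamma a -> Gamma b -> Gamma (a \o b)
    & forall a, Gamma a -> exists2 b, Gamma b & cancel a b /\ cancel b a].

Definition transitive_action (V : Type) (Gamma : set (V -> V)) : Prop :=
  forall x y, exists2 a, Gamma a & a x = y.

Definition laplacian (V : choiceType) (R : realType) (adj : V -> V -> Prop)
  (u : V -> R) (x : V) : R :=
  (\sum_(y \in neighbors adj x) (u y - u x))%R.

Definition coord_sets (V : Type) (R : realType) : set (set (V -> R)) :=
  [set A | exists x (B : set R), measurable B /\ A = (fun f => f x) @^-1` B].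

Definition prod_measurable (V : Type) (R : realType) : set (set (V -> R)) :=
  <<s @coord_sets V R >>.

Definition random_function (d : measure_display) (Omega : measurableType d)
  (R : realType) (V : Type) (h : Omega -> V -> R) : Prop :=
  forall x, measurable_fun setT (fun w => h w x).

Definition same_law (d : measure_display) (Omega : measurableType d)
  (R : realType) (P : probability Omega R) (V : Type)
  (h1 h2 : Omega -> V -> R) : Prop :=
  forall A, prod_measurable A -> P (h1 @^-1` A) = P (h2 @^-1` A).

Definition gamma_invariant_law (d : measure_display) (Omega : measurableType d)
  (R : realType) (P : probability Omega R) (V : Type)
  (Gamma : set (V -> V)) (h : Omega -> V -> R) : Prop :=
  forall a ainv, Gamma a -> cancel a ainv -> cancel ainv a ->
    same_law P (fun w x => h w (ainv x)) h.

(* Main.v *)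
Require Import Defs.
From HB Require Import structures.
From mathcomp Require Import all_boot all_order all_algebra.
From mathcomp Require Import all_classical all_reals all_analysis.
From mathcomp Require Import measurable_realfun.
From mathcomp Require Import lra.
From Stdlib Require Import Relations.
Import Order.TTheory GRing.Theory Num.Theory.
Local Open Scope classical_set_scope.
Local Open Scope ring_scope.

Lemma law_eq (R : realType) (V : choiceType) (adj : V -> V -> Prop)
  (Gamma : set (V -> V))
  (d : measure_display) (Omega : measurableType d) (P : probability Omega R)
  (h : Omega -> V -> R) :
  automorphism_group adj Gamma -> transitive_action Gamma ->
  gamma_invariant_law P Gamma h ->
  forall y z (B : set R), measurable B ->
  P [set w | B (h w y)] = P [set w | B (h w z)].
Proof.
move=> [_ _ _ inv] tr law y z B mB.
have [a Ga ayz] := tr y z.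
have [b Gb [ab ba]] := inv a Ga.
have := law a b Ga ab ba ((fun f => f z) @^-1` B) _.
  rewrite /preimage /= -ayz ab; apply.
rewrite /prod_measurable; apply: sub_sigma_algebra.
by exists (a y), B; split.
Qed.


Lemma int_law (R : realType) (d : measure_display) (Omega : measurableType d)
  (P : probability Omega R) (X Y : Omega -> R) :
  measurable_fun setT X -> measurable_fun setT Y ->
  (forall B, measurable B -> P (X @^-1` B) = P (Y @^-1` B)) ->
  forall g : R -> R, measurable_fun setT g -> (forall t, 0 <= g t) ->
  (\int[P]_w (g (X w))%:E = \int[P]_w (g (Y w))%:E)%E.
Proof.
move=> mX mY law g mg g0.
have eX := @ge0_integral_pushforward _ _ _ _ _ _ mX P setT (fun t => (g t)%:E)
  measurableT ltac:(by apply/measurable_EFinP) (fun t _ => g0 t).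
have eY := @ge0_integral_pushforward _ _ _ _ _ _ mY P setT (fun t => (g t)%:E)
  measurableT ltac:(by apply/measurable_EFinP) (fun t _ => g0 t).
rewrite !preimage_setT in eX eY.
rewrite -eX -eY; apply: eq_measure_integral => A mA _.
exact: law.

Qed.

Arguments int_law {R d Omega} P {X Y}.

Lemma sum_cst_seq (R : realType) (V : Type) (s : seq V) (k : R) :
  \sum_(y <- s) k = k *+ size s.
Proof.
elim: s => [|a s IH]; first by rewrite big_nil.
by rewrite big_cons IH /= mulrS.
Qed.

Lemma sum_shift (R : realType) (V : Type) (s : seq V) (f : V -> R) t c :
  \sum_(y <- s) (f y - t) = 0 ->
  \sum_(y <- s) (f y - c) = (size s)%:R * (t - c).
Proof.
move=> harm.
have -> : \sum_(y <- s) (f y - c) = \sum_(y <- s) ((f y - t) + (t - c)).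
  by apply: eq_bigr => y _; rewrite addrA subrK.
by rewrite big_split /= harm add0r sum_cst_seq mulr_natl.
Qed.

Section Pure.
Variables (R : realType) (V : eqType).

Lemma sum_ge_term (s : seq V) (F : V -> R) y :
  y \in s -> (forall z, 0 <= F z) -> F y <= \sum_(z <- s) F z.
Proof.
move=> ys F0; rewrite (big_rem y) //= lerDl; exact: sumr_ge0.
Qed.

Arguments sum_ge_term {s} F {y}.



Lemma stepA (s : seq V) (f : V -> R) (t : R) :
  \sum_(y <- s) (f y - t) = 0 ->
  (forall q : rat, \sum_(y <- s) Num.max (f y - ratr q) 0
                   <= (size s)%:R * Num.max (t - ratr q) 0) ->
  forall y, y \in s -> f y = t.
Proof.
move=> harm hq.
have nolt : forall y1 y2, y1 \in s -> y2 \in s -> ~ f y1 < f y2.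
  move=> y1 y2 y1s y2s lt12.
  have [q] := rat_in_itvoo lt12; rewrite in_itv /= => /andP[l1 l2].
  set c := ratr q in l1 l2.
  have sa : \sum_(y <- s) (f y - c) = (size s)%:R * (t - c).
    have -> : \sum_(y <- s) (f y - c) = \sum_(y <- s) ((f y - t) + (t - c)).
      by apply: eq_bigr => y _; rewrite addrA subrK.
    by rewrite big_split /= harm add0r sum_cst_seq mulr_natl.
  have := hq q; rewrite -/c.
  have [tc|tc] := leP 0 (t - c).
    rewrite -sa => hle.
    have h1 : \sum_(y <- s) (Num.max (f y - c) 0 - (f y - c)) <= 0.
      by rewrite sumrB subr_le0.
    have h2 := sum_ge_term (fun z => Num.max (f z - c) 0 - (f z - c)) y1s
      (fun z => ltac:(by rewrite subr_ge0 le_max lexx)).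
    have := le_trans h2 h1; rewrite /= (max_r (ltW _)) ?subr_lt0 //.
    by rewrite sub0r oppr_le0 subr_ge0 leNgt l1.
  rewrite mulr0 => hle.
  have := sum_ge_term (fun y => Num.max (f y - c) 0) y2s.
  move=> /(_ (fun z => ltac:(by rewrite le_max lexx orbT))) => h2.
  have := le_trans h2 hle; rewrite (max_l (ltW _)) ?subr_gt0 //.
  by rewrite leNgt subr_gt0 l2.
move=> y0 y0s.
have eqall : forall y, y \in s -> f y = f y0.
  move=> y ys; apply/eqP; rewrite eq_le !leNgt.
  by apply/andP; split; apply/negP => /(nolt _ _ _ _); apply.
have : \sum_(y <- s) (f y - t) = (f y0 - t) *+ size s.
  rewrite -sum_cst_seq big_seq [RHS]big_seq; apply: eq_bigr => y ys.
  by rewrite eqall.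
rewrite harm => /esym/eqP; rewrite mulrn_eq0 subr_eq0 => /orP[|/eqP //].
by move/eqP/size0nil => s0; move: y0s; rewrite s0.
Qed.
End Pure.

Lemma key (R : realType) (V : choiceType)
  (d : measure_display) (Omega : measurableType d) (P : probability Omega R)
  (h v : Omega -> V -> R) (s : seq V) (x : V) (c : R) :
  (forall y, measurable_fun setT (fun w => h w y)) ->
  (forall y, measurable_fun setT (fun w => v w y)) ->
  (forall y z (B : set R), measurable B ->
     P [set w | B (h w y)] = P [set w | B (h w z)]) ->
  (forall w, \sum_(y <- s) (h w y - h w x) = 0) ->
  (forall w y, h w y <= v w y) ->
  (exists M : R, forall y, (\int[P]_w (Num.max (v w y) 0)%:E <= M%:E)%E) ->
  {ae P, forall w, \sum_(y <- s) Num.max (h w y - c) 0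
                     <= (size s)%:R * Num.max (h w x - c) 0}.
Proof.
move=> mh mv hlaw harm hv [M hM].
pose g y w := Num.max (h w y - c) 0.
have mgf : measurable_fun setT (fun t : R => Num.max (t - c) 0).
  by apply: measurable_funrpos; apply: measurable_funB => //.
have mg y : measurable_fun setT (g y).
  by apply: measurable_funrpos; apply: measurable_funB => //.
have g0 y w : 0 <= g y w by rewrite /g le_max lexx orbT.
have eqm y : (\int[P]_w (g y w)%:E = \int[P]_w (g x w)%:E)%E.
  have g0' : forall t : R, 0 <= Num.max (t - c) 0.
    by move=> t; rewrite le_max lexx orbT.
  rewrite /g; refine (int_law P (mh y) (mh x) (fun B mB => hlaw y x B mB) _ mgf g0').
set m := (\int[P]_w (g x w)%:E)%E.
have m0 : (0 <= m)%E by apply: integral_ge0 => w _; rewrite lee_fin.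
have mfin : m \is a fin_num.
  rewrite ge0_fin_numE //; apply: (le_lt_trans _ (ltry (M + `|c|))).
  apply: (@le_trans _ _ (\int[P]_w ((Num.max (v w x) 0)%:E + `|c|%:E))%E).
    apply: ge0_le_integral => //.
    - by move=> w _; rewrite lee_fin.
    - by apply/measurable_EFinP.
    - apply: emeasurable_funD => //; apply/measurable_EFinP.
      exact: measurable_funrpos.
    move=> w _; rewrite -EFinD lee_fin /g.
    have := hv w x; have := normr_ge0 c; have := ler_norm (- c); rewrite normrN.
    have : v w x <= Num.max (v w x) 0 by rewrite le_max lexx.
    move=> h1 h2 h3 h4; rewrite ge_max; apply/andP; split; last first.
      by rewrite addr_ge0 // le_max lexx orbT.
    lra.
  rewrite ge0_integralD //; last first.
  - by apply/measurable_EFinP; exact: measurable_funrpos.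
  - by move=> w _; rewrite lee_fin le_max lexx orbT.
  rewrite integral_cst //.
  rewrite [X in (_ * X)%E]probability_setT.
  by rewrite mule1 EFinD; apply: leeD.
pose mm := fine m.
have mE : m = mm%:E by rewrite fineK.
pose D := (size s)%:R : R.
pose F w := \sum_(y <- s) g y w - D * g x w.
have F0 w : 0 <= F w.
  rewrite subr_ge0 /D /g; case: (leP 0 (h w x - c)) => hxc.
    rewrite -(@sum_shift R V s (fun y => h w y) (h w x) c (harm w)).
    by apply: ler_sum => y _; rewrite le_max lexx.
  by rewrite mulr0 sumr_ge0 // => y _; rewrite le_max lexx orbT.
have mF : measurable_fun setT F.
  apply: measurable_funB; first exact: measurable_sum.
  by apply: measurable_funM => //.
have I1 : (\int[P]_w (\sum_(y <- s) g y w)%:E = (mm *+ size s)%:E)%E.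
  under eq_integral => w _ do rewrite -sumEFin.
  rewrite ge0_integral_sum //; last 2 first.
  - by move=> y; apply/measurable_EFinP.
  - by move=> y w _; rewrite lee_fin.
  rewrite (eq_bigr (fun _ => mm%:E)); last by move=> y _; rewrite eqm -/m mE.
  by rewrite sumEFin sum_cst_seq.
have I2 : (\int[P]_w (\sum_(y <- s) g y w)%:E =
           \int[P]_w (F w)%:E + (D * mm)%:E)%E.
  transitivity (\int[P]_w ((F w)%:E + (D%:E * (g x w)%:E)))%E.
    by apply: eq_integral => w _; rewrite -EFinM -EFinD /F subrK.
  rewrite ge0_integralD //; last 4 first.
  - by move=> w _; rewrite lee_fin.
  - by apply/measurable_EFinP.
  - by move=> w _; rewrite -EFinM lee_fin mulr_ge0.
  - by apply/measurable_EFinP; apply: measurable_funM => //.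
  rewrite ge0_integralZl //; last 3 first.
  - by apply/measurable_EFinP.
  - by move=> w _; rewrite lee_fin.
  - by rewrite lee_fin.
  by rewrite -/m mE -EFinM.
have IF : (\int[P]_w (F w)%:E = 0)%E.
  move: I2; rewrite I1.
  have : (0 <= \int[P]_w (F w)%:E)%E by apply: integral_ge0 => w _; rewrite lee_fin.
  move: (\int[P]_w (F w)%:E)%E => I; case: I => [r| |] //= _.
  rewrite -EFinD => /eqP; rewrite eqe => /eqP e.
  apply/eqP; rewrite eqe; apply/eqP; move: e; rewrite /D mulr_natl; lra.
have mFE : measurable_fun setT (fun w => (F w)%:E) by apply/measurable_EFinP.
have := (ae_eq_integral_abs P measurableT mFE).1.
have -> : (\int[P]_(w in setT) `|(F w)%:E| = \int[P]_w (F w)%:E)%E.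
  by apply: eq_integral => w _; rewrite gee0_abs // lee_fin.
move=> /(_ IF); apply: filterS => w /(_ I) /= Fw0.
have : F w = 0 by injection Fw0.
by move/eqP; rewrite subr_eq0 => /eqP ->.
Qed.


Section Ball.
Variables (V : choiceType) (adj : V -> V -> Prop) (o : V).

Fixpoint ball (n : nat) : seq V :=
  if n is n'.+1 then
    ball n' ++ flatten [seq (finmap.enum_fset (fset_set (neighbors adj x)) : seq V) | x <- ball n']
  else [:: o].

Lemma ball_all : locally_finite adj -> connected_graph adj ->
  forall x, exists n, x \in ball n.
Proof.
move=> lf conn x.
have := clos_rt_rtn1 _ _ _ _ (conn o x).
elim=> [|y z ayz _ [n yn]]; first by exists 0%N; rewrite mem_seq1.
exists n.+1; rewrite /= mem_cat; apply/orP; right.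
apply/flatten_mapP; exists y => //.
by rewrite in_fset_set //; apply/mem_set.
Qed.
End Ball.

Theorem lemma5p4 (R : realType) (V : choiceType) (adj : V -> V -> Prop)
  (Gamma : set (V -> V))
  (d : measure_display) (Omega : measurableType d) (P : probability Omega R)
  (h u v : Omega -> V -> R) :
  simple_graph adj -> infinite_graph V -> connected_graph adj ->
  locally_finite adj -> vertex_transitive adj ->
  automorphism_group adj Gamma -> transitive_action Gamma ->
  random_function h -> gamma_invariant_law P Gamma h ->
  (forall w x, laplacian adj (h w) x = 0) ->
  random_function u -> random_function v ->
  (forall w x, 0 <= u w x) ->
  (forall w x, h w x = v w x - u w x) ->
  (exists M : R, forall x,
      (\int[P]_w (Num.max (v w x) 0)%:E <= M%:E)%E) ->
  {ae P, forall w, forall x y, h w x = h w y}.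
Proof.
move=> sg inf conn lf vt ag tr mh hlaw harmh mu mv u0 hvu bound.
have : exists o0 : V, True.
  apply: contrapT => no; apply: inf; rewrite (_ : [set: V] = set0) //.
  by apply/seteqP; split=> // z _; apply: no; exists z.
case=> o0 _.
have hv w y : h w y <= v w y by have := u0 w y; rewrite hvu; lra.
have hlaw' := @law_eq _ _ _ _ _ _ _ _ ag tr hlaw.
pose s x := (finmap.enum_fset (fset_set (neighbors adj x)) : seq V).
have harm w x : \sum_(y <- s x) (h w y - h w x) = 0.
  by have := harmh w x; rewrite /laplacian fsbig_finite.
pose xx n k := nth o0 (ball _ adj o0 n) k.
have AE : {ae P, forall w, forall n k m : nat,
   match (unpickle m : option rat) with
   | Some q => \sum_(y <- s (xx n k)) Num.max (h w y - ratr q) 0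
                 <= (size (s (xx n k)))%:R * Num.max (h w (xx n k) - ratr q) 0
   | None => true end}.
  apply: ae_foralln => n; apply: ae_foralln => k; apply: ae_foralln => m.
  case: (unpickle m) => [q|]; last exact: aeW.
  exact: (@key R V d Omega P h v _ _ _ mh mv hlaw' (fun w => harm w _) hv bound).
apply: filterS AE => w Hw.
have nbr x y : adj x y -> h w y = h w x.
  move=> axy.
  have [n xn] := @ball_all _ adj o0 lf conn x.
  have ex : xx n (index x (ball _ adj o0 n)) = x by rewrite /xx nth_index.
  apply: (@stepA R V (s x) (h w) (h w x) (harm w x)).
    by move=> q; have := Hw n (index x (ball _ adj o0 n)) (pickle q); rewrite pickleK ex.
  by rewrite in_fset_set //; apply/mem_set.
move=> x y; elim: (conn x y) => [a b /nbr -> //| a //| a b c _ -> _ ->] //.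
Qed.
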